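(* Let $s\in\mathbb{Z}$ and let $f$ be any active face of $\square_{\alpha_s}$. Then $g_{\alpha_s}(f)$ is an active face of $\square_{\alpha_{s+1}}$.
   Context: Fix $d\ge1$, $\lambda>0$, $\alpha_s=\lambda2^s$ ($s\in\mathbb{Z}$), and grids $G_{\alpha_s}\subset\mathbb{R}^d$ with $G_{\alpha_0}=\lambda\mathbb{Z}^d$ and $G_{\alpha_{s+1}}=2(G_{\alpha_s}-O_s)+O_s+\frac{\alpha_s}{2}\varepsilon_s$ for some $O_s\in G_{\alpha_s}$, $\varepsilon_s\in\{-1,1\}^d$. $\mathrm{Vor}_G(x)$ is the Voronoi cell of $x$ in grid $G$. $\square_{\alpha_s}$ is the cubical complex of faces $\prod_j[x_j,x_j+m_j]$, $x\in G_{\alpha_s}$, $m_j\in\{0,\alpha_s\}$; a facet of a $k$-face is a $(k-1)$-face contained in it. $g_{\alpha_s}$ maps a vertex $x$ to the unique $y\in G_{\alpha_{s+1}}$ with $x\in\mathrm{Vor}_{G_{\alpha_{s+1}}}(y)$, and a face to the convex hull of the images of its vertices (which is a face of $\square_{\alpha_{s+1}}$). Let $P\subset\mathbb{R}^d$ be finite; $a_{\alpha_s}(p)$ is the grid point of $G_{\alpha_s}$ whose Voronoi cell contains $p$ (assumed unique), and $V_{\alpha_s}:=a_{\alpha_s}(P)$ is the set of active vertices. A face $f$ of $\square_{\alpha_s}$ is spanned by $V\subseteq G_{\alpha_s}$ if $f\cap V$ is non-empty and not contained in any facet of $f$. The active faces of $\square_{\alpha_s}$ are the faces spanned by $V_{\alpha_s}$.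 *)

(* Defs.v *)
From HB Require Import structures.
From mathcomp Require Import all_boot all_order all_algebra.
From mathcomp Require Import classical_sets reals.
Set Implicit Arguments.
Unset Strict Implicit.
Unset Printing Implicit Defensive.
Import Order.TTheory GRing.Theory Num.Theory.
Local Open Scope ring_scope.
Local Open Scope classical_set_scope.

Section Defs.
Variables (R : realType) (d : nat).
Notation pt := 'rV[R]_d.

Definition alpha (lam : R) (s : int) : R := lam * (2%:R : R) ^ s.

Definition sqdist (p q : pt) : R := \sum_(j < d) (p ord0 j - q ord0 j) ^+ 2.

Definition vor (G : set pt) (x : pt) : set pt :=
  [set p | forall y, G y -> sqdist p x <= sqdist p y].

Definition lattice (lam : R) : set pt :=
  [set x | forall j, exists k : int, x ord0 j = lam * k%:~R].

Definition box (a : R) (x : pt) (b : 'I_d -> bool) : set pt :=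
  [set p | forall j, x ord0 j <= p ord0 j <= x ord0 j + (if b j then a else 0)].

Definition bdim (b : 'I_d -> bool) : nat := #|[pred j | b j]|.

Definition cube_face (G : set pt) (a : R) (F : set pt) : Prop :=
  exists x b, G x /\ F = box a x b.

Definition facet_of (G : set pt) (a : R) (F' F : set pt) : Prop :=
  exists x b x' b', [/\ G x /\ G x', F = box a x b, F' = box a x' b',
                        F' `<=` F & (bdim b' + 1)%N = bdim b].

Definition spanned (G : set pt) (a : R) (V F : set pt) : Prop :=
  F `&` V !=set0 /\ forall F', facet_of G a F' F -> ~ (F `&` V `<=` F').

Definition active_vertices (G : set pt) (P : seq pt) : set pt :=
  [set y | G y /\ exists2 p, p \in P & vor G y p].

Definition active_face (G : set pt) (a : R) (P : seq pt) (F : set pt) : Prop :=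
  cube_face G a F /\ spanned G a (active_vertices G P) F.

Definition convex_set (C : set pt) : Prop :=
  forall x y (t : R), C x -> C y -> 0 <= t <= 1 -> C ((1 - t) *: x + t *: y).

Definition conv (A : set pt) : set pt :=
  [set p | forall C, convex_set C -> A `<=` C -> C p].

(* g applied to a face F of the complex of G: the convex hull of the images
   of its vertices (= F `&` G); the image of a vertex x is the point y of G'
   whose Voronoi cell (in G') contains x. *)
Definition gface (G G' : set pt) (F : set pt) : set pt :=
  conv [set y | G' y /\ exists2 x, (F `&` G) x & vor G' y x].

Definition grid_step (G G' : set pt) (a : R) : Prop :=
  exists O (eps : pt), [/\ G O, (forall j, eps ord0 j = 1 \/ eps ord0 j = -1) &
    G' = [set (2%:R *: (x - O) + O + (a / 2%:R) *: eps) | x in G]].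

End Defs.

(* Main.v *)
Require Import Defs.
From HB Require Import structures.
From mathcomp Require Import all_boot all_order all_algebra.
From mathcomp Require Import classical_sets reals.
From mathcomp Require Import zify ring lra.
Import Order.TTheory GRing.Theory Num.Theory.
Local Open Scope ring_scope.
Local Open Scope classical_set_scope.
Set Implicit Arguments.
Unset Strict Implicit.
Section OneD.
Variable R : realType.

Definition onl (c a r : R) := exists k : int, r = c + a * k%:~R.
Definition close (e x y : R) := x - y <= e /\ y - x <= e.

Lemma int_between (z lo hi : int) :
  (lo%:~R - 1 < z%:~R :> R) -> (z%:~R < hi%:~R + 1 :> R) -> (lo <= z <= hi)%R.
Proof.
move=> h1 h2.
have h1' : ((lo - 1)%:~R < z%:~R :> R) by rewrite intrB.
have h2' : (z%:~R < (hi + 1)%:~R :> R) by rewrite intrD.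
rewrite ltr_int in h1'; rewrite ltr_int in h2'. lia.
Qed.

Lemma intr_val (z : int) (v : int) : z = v -> (z%:~R : R) = v%:~R.
Proof. by move->. Qed.

Lemma half_exists (k : int) : exists m : int, k - m - m = 0 \/ k - m - m = 1.
Proof.
exists (k %/ 2)%Z.
have h1 := divz_eq k 2.
have h2 := modz_ge0 k (isT : (2:int) != 0).
have h3 := ltz_pmod k (isT : (0:int) < 2).
move: h1 h2 h3; set q := (k %/ 2)%Z; set r := (k %% 2)%Z. lia.
Qed.

Lemma ext1 (a o e u w : R) : 0 < a -> (e = 1 \/ e = -1) -> onl o a u ->
  onl (o + a / 2 * e) (2 * a) w -> close a u w -> u - w = a / 2 \/ u - w = - (a / 2).
Proof.
move=> a0 he [k ->] [m ->] [c1 c2].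
have hz : ((k - m - m)%:~R : R) = k%:~R - m%:~R - m%:~R by rewrite !intrB.
case: he => -> in c1 c2 *.
- have : (0 <= k - m - m <= 1)%R.
    apply: int_between; rewrite hz /=; nra.
  move=> hb; have [h|h] : k - m - m = 0 \/ k - m - m = 1 by lia.
  + have h' : (k%:~R - m%:~R - m%:~R : R) = 0 by rewrite -hz h. right. have -> : (k%:~R : R) = m%:~R + m%:~R by lra. lra.
  + have h' : (k%:~R - m%:~R - m%:~R : R) = 1 by rewrite -hz h. left. have -> : (k%:~R : R) = m%:~R + m%:~R + 1 by lra. lra.
- have : (-1 <= k - m - m <= 0)%R.
    apply: int_between; rewrite hz /=; nra.
  move=> hb; have [h|h] : k - m - m = -1 \/ k - m - m = 0 by lia.
  + have h' : (k%:~R - m%:~R - m%:~R : R) = -1 by rewrite -hz h. right. have -> : (k%:~R : R) = m%:~R + m%:~R - 1 by lra. lra.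
  + have h' : (k%:~R - m%:~R - m%:~R : R) = 0 by rewrite -hz h. left. have -> : (k%:~R : R) = m%:~R + m%:~R by lra. lra.
Qed.


Lemma onl_diff (c A w w' : R) : onl c A w -> onl c A w' ->
  exists n : int, w' - w = A * n%:~R.
Proof.
move=> [k ->] [k' ->]; exists (k' - k); rewrite intrB; ring.
Qed.

Lemma onl_shift (o a u : R) : onl o a u -> onl o a (u + a).
Proof. move=> [k ->]; exists (k + 1); rewrite intrD; ring. Qed.

Lemma uniq1 (a o e u w w' : R) : 0 < a -> (e = 1 \/ e = -1) -> onl o a u ->
  onl (o + a / 2 * e) (2 * a) w -> onl (o + a / 2 * e) (2 * a) w' ->
  close a u w -> close a u w' -> w' = w.
Proof.
move=> a0 he hu hw hw' c c'.
have h1 := ext1 a0 he hu hw c.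
have h2 := ext1 a0 he hu hw' c'.
have [n hn] := onl_diff hw hw'.
have : (0 <= n <= 0)%R by apply: int_between; rewrite /=; case: h1; case: h2; nra.
move=> hb; have h0 : n = 0 by lia.
move: hn; rewrite h0 mulr0 => hn. lra.
Qed.

Lemma edge1 (a o e u w w' : R) : 0 < a -> (e = 1 \/ e = -1) -> onl o a u ->
  onl (o + a / 2 * e) (2 * a) w -> onl (o + a / 2 * e) (2 * a) w' ->
  close a u w -> close a (u + a) w' -> w' = w \/ w' = w + 2 * a.
Proof.
move=> a0 he hu hw hw' c c'.
have h1 := ext1 a0 he hu hw c.
have h2 := ext1 a0 he (onl_shift hu) hw' c'.
have [n hn] := onl_diff hw hw'.
have : (0 <= n <= 1)%R by apply: int_between; rewrite /=; case: h1; case: h2; nra.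
move=> hb; have [h0|h0] : n = 0 \/ n = 1 by lia.
- left; move: hn; rewrite h0 mulr0 => hn; lra.
- right; move: hn; rewrite h0 mulr1 => hn; lra.
Qed.

Lemma exist1 (a o e u : R) : 0 < a -> (e = 1 \/ e = -1) -> onl o a u ->
  exists w, onl (o + a / 2 * e) (2 * a) w /\ close (a / 2) u w.
Proof.
move=> a0 he [k ->].
case: he => ->.
- have [m hm] := half_exists k.
  exists (o + a / 2 * 1 + 2 * a * m%:~R); split; first by exists m.
  case: hm => h.
  + have h' : (k%:~R - m%:~R - m%:~R : R) = 0 by rewrite -!intrB h.
    have -> : (k%:~R : R) = m%:~R + m%:~R by lra.
    rewrite /close; lra.
  + have h' : (k%:~R - m%:~R - m%:~R : R) = 1 by rewrite -!intrB h.
    have -> : (k%:~R : R) = m%:~R + m%:~R + 1 by lra.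
    rewrite /close; lra.
- have [m hm] := half_exists (k + 1).
  exists (o + a / 2 * -1 + 2 * a * m%:~R); split; first by exists m.
  case: hm => h.
  + have h' : (k%:~R + 1 - m%:~R - m%:~R : R) = 0 by rewrite -(intrD _ k 1) -!intrB h.
    have -> : (k%:~R : R) = m%:~R + m%:~R - 1 by lra.
    rewrite /close; lra.
  + have h' : (k%:~R + 1 - m%:~R - m%:~R : R) = 1 by rewrite -(intrD _ k 1) -!intrB h.
    have -> : (k%:~R : R) = m%:~R + m%:~R by lra.
    rewrite /close; lra.
Qed.

End OneD.
Section Dd.
Variables (R : realType) (d : nat).
Notation pt := 'rV[R]_d.

Definition Lat (c : pt) (a : R) : set pt := [set p | forall j, onl (c ord0 j) a (p ord0 j)].

Lemma onl_shiftm (o a u : R) : onl o a u -> onl o a (u - a).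
Proof. move=> [k ->]; exists (k - 1); rewrite intrB; ring. Qed.

Lemma sqdist_split (p y : pt) j :
  sqdist p y = (p ord0 j - y ord0 j) ^+ 2 + \sum_(i < d | i != j) (p ord0 i - y ord0 i) ^+ 2.
Proof. by rewrite /sqdist (bigD1 j). Qed.

Lemma vor_char (c : pt) (A : R) (y p : pt) : 0 < A -> Lat c A y ->
  (vor (Lat c A) y p <-> forall j, close (A / 2) (p ord0 j) (y ord0 j)).
Proof.
move=> A0 Ly; split.
- move=> hv j.
  have key : forall s : R, (s = A \/ s = - A) ->
      (p ord0 j - y ord0 j) ^+ 2 <= (p ord0 j - y ord0 j - s) ^+ 2.
    move=> s hs.
    pose z : pt := y + s *: delta_mx ord0 j.
    have Lz : Lat c A z.
      move=> i; rewrite /z !mxE eqxx /=.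
      case: eqP => [->|_]; last by rewrite mulr0 addr0; apply: Ly.
      rewrite mulr1; case: hs => ->; [exact: onl_shift | exact: onl_shiftm].
    have := hv z Lz.
    rewrite (sqdist_split p y j) (sqdist_split p z j).
    have -> : \sum_(i < d | i != j) (p ord0 i - z ord0 i) ^+ 2 =
              \sum_(i < d | i != j) (p ord0 i - y ord0 i) ^+ 2.
      apply: eq_bigr => i hi; rewrite /z !mxE eqxx /= (negbTE hi) mulr0 addr0 //.
    rewrite /z !mxE eqxx eqxx /= mulr1 => h.
    have -> : p ord0 j - y ord0 j - s = p ord0 j - (y ord0 j + s) by ring.
    lra.
  have k1 := key A (or_introl erefl).
  have k2 := key (- A) (or_intror erefl).
  rewrite /close; split; rewrite leNgt; apply/negP => h; rewrite !expr2 in k1 k2; nra.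
- move=> hc z Lz.
  apply: ler_sum => j _.
  have [n hn] := onl_diff (Ly j) (Lz j).
  have [h0|[h1|h2]] : n = 0 \/ (1 <= n)%R \/ (n <= -1)%R by lia.
  + move: hn; rewrite h0 mulr0 => hn.
    have -> : z ord0 j = y ord0 j by lra.
    by [].
  + have hN : (1 <= (n%:~R : R)) by rewrite -(ler_int R 1) in h1.
    have -> : p ord0 j - z ord0 j = p ord0 j - y ord0 j - A * n%:~R by lra.
    case: (hc j) => c1 c2.
    have hA : A <= A * n%:~R by nra.
    rewrite !expr2; nra.
  + have hN : ((n%:~R : R) <= -1) by rewrite -(ler_int R n (-1)) in h2.
    have -> : p ord0 j - z ord0 j = p ord0 j - y ord0 j - A * n%:~R by lra.
    case: (hc j) => c1 c2.
    have hA : A * n%:~R <= - A by nra.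
    rewrite !expr2; nra.
Qed.


Definition vert (A : R) (y : pt) (c : 'I_d -> bool) : set pt :=
  [set p | forall j, p ord0 j = y ord0 j \/ (c j /\ p ord0 j = y ord0 j + A)].

Lemma box_convex (A : R) (y : pt) c : convex_set (box A y c).
Proof.
move=> p q t hp hq /andP [t0 t1] j; rewrite !mxE.
have /andP [a1 a2] := hp j; have /andP [b1 b2] := hq j.
move: a2 b2; set H := y ord0 j + _ => a2 b2.
apply/andP; split; nra.
Qed.

Lemma vert_box (A : R) (y : pt) c : 0 < A -> vert A y c `<=` box A y c.
Proof.
move=> A0 p hp j; case: (hp j) => [->|[-> ->]].
- by case: (c j); apply/andP; split; lra.
- by apply/andP; split; lra.
Qed.

Lemma conv_vert (A : R) (y : pt) c : 0 < A -> conv (vert A y c) = box A y c.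
Proof.
move=> A0; apply/seteqP; split.
- move=> p hp; apply: hp; [exact: box_convex | exact: vert_box].
- move=> q0 hq0 C hC hvC.
  suff H : forall n, forall q, box A y c q ->
      (forall j : 'I_d, (n <= j)%N -> q ord0 j = y ord0 j \/ (c j /\ q ord0 j = y ord0 j + A)) -> C q.
    by apply: (H d) => // j; rewrite leqNgt ltn_ord.
  elim=> [|n IH] q hq hv; first by apply: hvC => j; apply: hv.
  case: (ltnP n d) => hn; last first.
    apply: IH => // j hj; exfalso; move: (ltn_ord j); lia.
  pose j0 := Ordinal hn.
  have hv' : forall q', box A y c q' -> q' ord0 j0 = y ord0 j0 \/ (c j0 /\ q' ord0 j0 = y ord0 j0 + A) ->
     (forall j, j != j0 -> q' ord0 j = q ord0 j) -> C q'.
    move=> q' hq' h0 hj; apply: IH => // j hj'.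
    case: (eqVneq j j0) => [->//|ne]; rewrite hj //; apply: hv.
    have : (j : nat) != n by apply: contra ne => /eqP e; apply/eqP/val_inj => /=; rewrite e.
    move: hj'; clear; lia.
  case hc: (c j0); last first.
    apply: hv' => //; left; have /andP [] := hq j0; rewrite hc; lra.
  pose t := (q ord0 j0 - y ord0 j0) / A.
  pose qa : pt := \row_i (if i == j0 then y ord0 j0 else q ord0 i).
  pose qb : pt := \row_i (if i == j0 then y ord0 j0 + A else q ord0 i).
  have hqa : box A y c qa.
    move=> i; rewrite !mxE; case: eqP => [->|_]; last exact: hq.
    rewrite hc; apply/andP; split; lra.
  have hqb : box A y c qb.
    move=> i; rewrite !mxE; case: eqP => [->|_]; last exact: hq.
    rewrite hc; apply/andP; split; lra.
  have Ca : C qa.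
    apply: hv' => //; first by left; rewrite !mxE eqxx.
    by move=> j /negbTE hj; rewrite !mxE hj.
  have Cb : C qb.
    apply: hv' => //; first by right; rewrite !mxE eqxx.
    by move=> j /negbTE hj; rewrite !mxE hj.
  have /andP [h1 h2] := hq j0; rewrite hc in h2.
  have ht : 0 <= t <= 1.
    apply/andP; split; rewrite /t.
    - apply: divr_ge0; lra.
    - rewrite ler_pdivrMr //; lra.
  have -> : q = (1 - t) *: qa + t *: qb.
    apply/rowP => i; rewrite !mxE; case: eqP => [->|_]; last by ring.
    rewrite /t; field; lra.
  exact: hC.
Qed.

Lemma box_sub (A : R) (x x' : pt) b b' : 0 < A -> box A x' b' `<=` box A x b ->
  forall j, x ord0 j <= x' ord0 j /\
    x' ord0 j + (if b' j then A else 0) <= x ord0 j + (if b j then A else 0).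
Proof.
move=> A0 hs j.
have h1 : box A x b x'.
  apply: hs => i; apply/andP; split; first by [].
  case: (b' i); lra.
pose t : pt := \row_i (x' ord0 i + (if b' i then A else 0)).
have h2 : box A x b t.
  apply: hs => i; rewrite !mxE; apply/andP; split; last by [].
  case: (b' i); lra.
have /andP [c1 _] := h1 j; have /andP [_ c2] := h2 j; move: c2; rewrite !mxE => c2.
by split.
Qed.


Lemma core (a : R) (O eps : pt) (P : seq pt) (f : set pt) : 0 < a ->
  (forall j, eps ord0 j = 1 \/ eps ord0 j = -1) ->
  active_face (Lat O a) a P f ->
  active_face (Lat (O + (a / 2) *: eps) (2 * a)) (2 * a) P
     (gface (Lat O a) (Lat (O + (a / 2) *: eps) (2 * a)) f).
Proof.
move=> a0 he [[x [b [Gx ->]]] [[v0 [fv0 Vv0]] nof]].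
set Q := O + _ *: eps.
have A2 : 0 < 2 * a by lra.
have LQ : forall w, Lat Q (2 * a) w <->
    forall j, onl (O ord0 j + a / 2 * eps ord0 j) (2 * a) (w ord0 j).
  by move=> w; split => h j; move: (h j); rewrite /Q !mxE.
have vp : forall v, box a x b v -> Lat O a v ->
    forall j, v ord0 j = x ord0 j \/ (b j /\ v ord0 j = x ord0 j + a).
  move=> v hv Lv j; have /andP [h1 h2] := hv j.
  have [n hn] := onl_diff (Gx j) (Lv j).
  case hb: (b j) h2 => h2; last by left; lra.
  have : (0 <= n <= 1)%R by apply: int_between; rewrite /=; nra.
  move=> hn'; have [e|e] : n = 0 \/ n = 1 by lia.
  - by left; move: hn; rewrite e mulr0; lra.
  - by right; split => //; move: hn; rewrite e mulr1; lra.
have img : forall v, Lat O a v -> exists w, Lat Q (2 * a) w /\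
    forall j, close (a / 2) (v ord0 j) (w ord0 j).
  move=> v Lv.
  have : forall j, exists wj, onl (O ord0 j + a / 2 * eps ord0 j) (2 * a) wj /\
      close (a / 2) (v ord0 j) wj.
    by move=> j; exact: exist1 a0 (he j) (Lv j).
  case/fin_all_exists => wf hw; exists (\row_j wf j); split.
  - by apply/LQ => j; rewrite mxE; exact: (hw j).1.
  - by move=> j; rewrite mxE; exact: (hw j).2.
have actimg : forall v w, active_vertices (Lat O a) P v -> Lat Q (2 * a) w ->
    (forall j, close (a / 2) (v ord0 j) (w ord0 j)) -> active_vertices (Lat Q (2 * a)) P w.
  move=> v w [Lv [p pP hp]] Lw hc; split => //; exists p => //.
  apply/(vor_char p A2 Lw) => j.
  have := (vor_char p a0 Lv).1 hp j; case: (hc j); rewrite /close; lra.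
have pc : forall j, exists yc : R * bool, (yc.2 -> b j) /\ forall w,
   (onl (O ord0 j + a / 2 * eps ord0 j) (2 * a) w /\
      exists2 u, (u = x ord0 j \/ (b j /\ u = x ord0 j + a)) & close a u w) <->
   (w = yc.1 \/ (yc.2 /\ w = yc.1 + 2 * a)).
  move=> j.
  have [w0 [o0 c0]] := exist1 a0 (he j) (Gx j).
  have c0' : close a (x ord0 j) w0 by case: c0; rewrite /close; lra.
  case hb: (b j).
  - have [w1 [o1 c1]] := exist1 a0 (he j) (onl_shift (Gx j)).
    have c1' : close a (x ord0 j + a) w1 by case: c1; rewrite /close; lra.
    case: (edge1 a0 (he j) (Gx j) o0 o1 c0' c1') => e1.
    + exists (w0, false); split => //= w; split.
      * move=> [ow [u [->|[_ ->]] cu]]; left.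
        -- exact: (uniq1 a0 (he j) (Gx j) o0 ow c0' cu).
        -- rewrite -e1; exact: (uniq1 a0 (he j) (onl_shift (Gx j)) o1 ow c1' cu).
      * by case=> [->|[]] //; split => //; exists (x ord0 j) => //; left.
    + exists (w0, true); split => //= w; split.
      * move=> [ow [u [->|[_ ->]] cu]].
        -- by left; exact: (uniq1 a0 (he j) (Gx j) o0 ow c0' cu).
        -- by right; split => //; rewrite -e1; exact: (uniq1 a0 (he j) (onl_shift (Gx j)) o1 ow c1' cu).
      * case=> [->|[_ ->]].
        -- by split => //; exists (x ord0 j) => //; left.
        -- by rewrite -e1; split => //; exists (x ord0 j + a) => //; right.
  - exists (w0, false); split => //= w; split.
    * move=> [ow [u [->|[//]] cu]]; left.
      exact: (uniq1 a0 (he j) (Gx j) o0 ow c0' cu).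
    * by case=> [->|[]] //; split => //; exists (x ord0 j) => //; left.
case/fin_all_exists: pc => ycf hyc.
pose y : pt := \row_j (ycf j).1.
pose cf := fun j => (ycf j).2.
have Yeq : [set w | Lat Q (2 * a) w /\ exists2 x', (box a x b `&` Lat O a) x' &
      vor (Lat Q (2 * a)) w x'] = vert (2 * a) y cf.
  apply/seteqP; split.
  - move=> w [Lw [x' [bx' Lx'] hv]] j; rewrite /y mxE; apply/(hyc j).2.
    split; first by move/LQ: Lw.
    exists (x' ord0 j); first exact: vp.
    have := (vor_char x' A2 Lw).1 hv j; rewrite /close; lra.
  - move=> w hw.
    have hj : forall j, onl (O ord0 j + a / 2 * eps ord0 j) (2 * a) (w ord0 j) /\
        exists2 u, (u = x ord0 j \/ (b j /\ u = x ord0 j + a)) & close a u (w ord0 j).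
      by move=> j; apply/(hyc j).2; have := hw j; rewrite /y mxE.
    have Lw : Lat Q (2 * a) w by apply/LQ => j; exact: (hj j).1.
    split => //.
    have : forall j, exists u, (u = x ord0 j \/ (b j /\ u = x ord0 j + a)) /\
        close a u (w ord0 j).
      by move=> j; case: (hj j) => _ [u h1 h2]; exists u.
    case/fin_all_exists => uf hu; exists (\row_j uf j).
    + split.
      * move=> j; rewrite mxE; case: (hu j) => [[->|[-> ->]] _].
        -- by case: (b j); apply/andP; split; lra.
        -- by apply/andP; split; lra.
      * move=> j; rewrite mxE; case: (hu j) => [[->|[_ ->]] _].
        -- exact: Gx.
        -- exact: onl_shift.
    + apply/(vor_char _ A2 Lw) => j; rewrite mxE; case: (hu j) => _.
      rewrite /close; lra.
have gf : gface (Lat O a) (Lat Q (2 * a)) (box a x b) = box (2 * a) y cf.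
  by rewrite /gface Yeq conv_vert.
rewrite gf.
have Gy : Lat Q (2 * a) y.
  apply/LQ => j; rewrite mxE.
  by case: ((hyc j).2 ((ycf j).1)) => _ /(_ (or_introl erefl)) [].
have imgV : forall v, (box a x b `&` active_vertices (Lat O a) P) v ->
    exists w, (box (2 * a) y cf `&` active_vertices (Lat Q (2 * a)) P) w /\
      forall j, close (a / 2) (v ord0 j) (w ord0 j).
  move=> v [bv Av]; have Lv := Av.1.
  have [w [Lw cw]] := img v Lv.
  exists w; split => //; split; last exact: actimg Av Lw cw.
  apply: vert_box => //.
  move=> j; rewrite /y mxE; apply/(hyc j).2.
  split; first by move/LQ: Lw.
  exists (v ord0 j); first exact: vp.
  by case: (cw j); rewrite /close; lra.
have facetL : forall j, b j -> forall t, (t = x ord0 j \/ t = x ord0 j + a) ->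
    (forall v, (box a x b `&` active_vertices (Lat O a) P) v -> v ord0 j = t) -> False.
  move=> j bj t ht hall.
  pose x' : pt := x + (t - x ord0 j) *: delta_mx ord0 j.
  pose b' := fun i => b i && (i != j).
  apply: (nof (box a x' b')).
  - exists x, b, x', b'; split => //.
    + split => // i; rewrite /x' !mxE eqxx /=.
      case: eqP => [->|_]; last by rewrite mulr0 addr0; exact: Gx.
      have -> : x ord0 j + (t - x ord0 j) * 1 = t by ring.
      by case: ht => ->; [exact: Gx | exact: onl_shift].
    + move=> p hp i; have := hp i; rewrite /x' /b' !mxE eqxx /=.
      case: (eqVneq i j) => [->|ne].
      * rewrite ?eqxx ?andbF ?bj ?mulr1 => /andP [h1 h2]; apply/andP; split; case: ht => ht; rewrite ht in h1 h2 *; lra.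
      * by rewrite mulr0 addr0 andbT.
    + rewrite /bdim [in RHS](cardD1 j) inE bj addnC; congr (_ + _)%N.
      by apply: eq_card => i; rewrite !inE /b' andbC.
  - move=> v hv i; rewrite /x' /b' !mxE eqxx /=.
    case: (eqVneq i j) => [->|ne].
    + rewrite ?eqxx ?andbF ?mulr1 (hall v hv); apply/andP; split; lra.
    + by rewrite mulr0 addr0 andbT; case: hv => hv _; exact: hv.
have src : forall j, b j -> forall u, (u = x ord0 j \/ (b j /\ u = x ord0 j + a)) ->
    exists v, (box a x b `&` active_vertices (Lat O a) P) v /\ v ord0 j = u.
  move=> j bj u hu.
  case: (boolp.pselect (exists v, (box a x b `&` active_vertices (Lat O a) P) v /\ v ord0 j = u)) => // hno.
  exfalso.
  have other : forall v, (box a x b `&` active_vertices (Lat O a) P) v -> v ord0 j <> u.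
    by move=> v hv e; apply: hno; exists v.
  case: hu => [e|[_ e]].
  - apply: (facetL j bj (x ord0 j + a)); first by right.
    move=> v hv; have := other v hv; case: hv => bv [Lv _].
    by case: (vp v bv Lv j) => [->|[_ ->]] //; rewrite e.
  - apply: (facetL j bj (x ord0 j)); first by left.
    move=> v hv; have := other v hv; case: hv => bv [Lv _].
    by case: (vp v bv Lv j) => [->|[_ ->]] //; rewrite e.
split; first by exists y, cf.
split.
  have [w [hw _]] := imgV v0 (conj fv0 Vv0); by exists w.
move=> F' [x1 [b1 [x2 [b2 [[Gx1 Gx2] e1 e2 sub card]]]]] hsub.
have s1 : box (2 * a) x1 b1 `<=` box (2 * a) y cf by rewrite -e1.
have s2 : box (2 * a) y cf `<=` box (2 * a) x1 b1 by rewrite -e1.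
have eqb : forall j, b1 j = cf j.
  move=> j; have [h1 h2] := box_sub A2 s1 j; have [h3 h4] := box_sub A2 s2 j.
  by move: h2 h4; case: (b1 j); case: (cf j) => //; lra.
have [j [bj1 bj2]] : exists j, b1 j /\ ~~ b2 j.
  case: (boolp.pselect (exists j, b1 j /\ ~~ b2 j)) => // hno; exfalso.
  have : (#|[pred j | b1 j]| <= #|[pred j | b2 j]|)%N.
    apply: subset_leq_card; apply/fintype.subsetP => j; rewrite !inE => h.
    by apply/negPn/negP => nb; apply: hno; exists j.
  by move: card; rewrite /bdim; lia.
have cj : cf j by rewrite -eqb.
have bj : b j by exact: (hyc j).1.
rewrite e2 in hsub sub.
have [_ hx2] := box_sub A2 sub j.
have wl : forall t, (t = y ord0 j \/ (cf j /\ t = y ord0 j + 2 * a)) -> x2 ord0 j = t.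
  move=> t ht.
  have := (hyc j).2 t; rewrite /y mxE in ht; case=> _ /(_ ht) [ot [u hu cu]].
  have [v [hv vj]] := src j bj u hu.
  have [w [hw cw]] := imgV v hv.
  have Lv := hv.2.1.
  have Lw : Lat Q (2 * a) w := hw.2.1.
  have ow := (LQ w).1 Lw j.
  have cw' : close a (v ord0 j) (w ord0 j) by case: (cw j); rewrite /close; lra.
  rewrite -vj in cu.
  have wt : w ord0 j = t := uniq1 a0 (he j) (Lv j) ot ow cu cw'.
  have := hsub w hw j; rewrite (negbTE bj2) addr0 => /andP [h1 h2].
  lra.
have := wl _ (or_introl erefl); have := wl _ (or_intror (conj cj erefl)).
lra.
Qed.

End Dd.
Section Grid.
Variables (R : realType) (d : nat).
Notation pt := 'rV[R]_d.

Lemma Lat_shift (c O : pt) (a : R) : Lat c a O -> Lat c a = Lat O a.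
Proof.
move=> hO; apply/seteqP; split => p hp j; have [k0 e0] := hO j; have [k ek] := hp j.
- exists (k - k0); rewrite intrB ek e0; ring.
- exists (k0 + k); rewrite intrD ek e0; ring.
Qed.

Lemma step_up (G G' : set pt) (a : R) (O eps : pt) :
  G = Lat O a -> G' = [set (2%:R *: (x - O) + O + (a / 2%:R) *: eps) | x in G] ->
  G' = Lat (O + (a / 2) *: eps) (2 * a).
Proof.
move=> -> ->; apply/seteqP; split.
- move=> w [x hx <-] j; have [k ek] := hx j; exists k; rewrite !mxE ek; ring.
- move=> w hw; exists ((2%:R^-1) *: (w - O - (a / 2) *: eps) + O).
  + move=> j; have [k ek] := hw j; exists k; move: ek; rewrite !mxE => ek; rewrite ek; by field.
  + apply/rowP => j; rewrite !mxE; by field.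
Qed.

Lemma step_down (G G' : set pt) (a : R) (O eps c' : pt) :
  G' = [set (2%:R *: (x - O) + O + (a / 2%:R) *: eps) | x in G] ->
  G' = Lat c' (2 * a) ->
  G = Lat ((2%:R^-1) *: (c' + O - (a / 2) *: eps)) a.
Proof.
move=> e1 e2; apply/seteqP; split.
- move=> x hx j.
  have : G' (2%:R *: (x - O) + O + (a / 2%:R) *: eps) by rewrite e1; exists x.
  rewrite e2 => /(_ j) [k]; rewrite !mxE => ek; exists k.
  have -> : x ord0 j = (2 * (x ord0 j - O ord0 j) + O ord0 j + a / 2 * eps ord0 j
      + O ord0 j - a / 2 * eps ord0 j) / 2 by by field.
  rewrite ek; by field.
- move=> x hx.
  have : G' (2%:R *: (x - O) + O + (a / 2%:R) *: eps).
    rewrite e2 => j; have [k ek] := hx j; exists k; move: ek; rewrite !mxE => ek.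
    rewrite ek; by field.
  rewrite e1 => -[x0 hx0 e]; suff -> : x = x0 by [].
  apply/rowP => j; have := congr1 (fun m : pt => m ord0 j) e; rewrite /= !mxE => ej.
  lra.
Qed.

Lemma alphaS (lam : R) (s : int) : alpha lam (s + 1) = 2 * alpha lam s.
Proof.
rewrite /alpha exprzDr ?unitfE ?pnatr_eq0 // expr1z; ring.
Qed.

Lemma alpha_gt0 (lam : R) (s : int) : 0 < lam -> 0 < alpha lam s.
Proof. move=> h; rewrite /alpha; apply: mulr_gt0 => //; apply: exprz_gt0; lra. Qed.

End Grid.

Theorem lemma7 (R : realType) (d : nat) (lam : R) (G : int -> set 'rV[R]_d)
  (P : seq 'rV[R]_d) :
  (0 < d)%N -> 0 < lam ->
  G 0 = lattice lam ->
  (forall s : int, grid_step (G s) (G (s + 1)) (alpha lam s)) ->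
  (forall (s : int) p y1 y2, p \in P -> G s y1 -> G s y2 ->
      vor (G s) y1 p -> vor (G s) y2 p -> y1 = y2) ->
  forall (s : int) (f : set 'rV[R]_d),
    active_face (G s) (alpha lam s) P f ->
    active_face (G (s + 1)) (alpha lam (s + 1)) P (gface (G s) (G (s + 1)) f).
Proof.
move=> _ lam0 G0 gs _.
have up : forall s : int, (exists c, G s = Lat c (alpha lam s)) ->
    exists c, G (s + 1) = Lat c (alpha lam (s + 1)).
  move=> s [c hc]; have [O [eps [GO he e]]] := gs s.
  exists (O + (alpha lam s / 2) *: eps); rewrite alphaS.
  apply: step_up e; rewrite hc; apply: Lat_shift; rewrite -hc.
  exact: GO.
have down : forall s : int, (exists c, G (s + 1) = Lat c (alpha lam (s + 1))) ->
    exists c, G s = Lat c (alpha lam s).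
  move=> s [c hc]; have [O [eps [GO he e]]] := gs s.
  rewrite alphaS in hc.
  by eexists; apply: step_down e hc.
have all : forall s : int, exists c, G s = Lat c (alpha lam s).
  suff H : forall n : nat, (exists c, G n%:Z = Lat c (alpha lam n%:Z)) /\
                           (exists c, G (- n%:Z) = Lat c (alpha lam (- n%:Z))).
    by case=> n; [exact: (H n).1 | rewrite NegzE; exact: (H n.+1).2].
  elim=> [|n [IH1 IH2]].
    have h0 : exists c, G 0 = Lat c (alpha lam 0).
      exists 0; rewrite G0 /alpha expr0z mulr1; apply/seteqP; split => p hp j;
        have [k ek] := hp j; exists k; rewrite ek !mxE; ring.
    by split => //; rewrite oppr0.
  split.
  - have -> : (n.+1 : int) = n%:Z + 1 by lia.
    exact: up.
  - apply: down; have -> : - (n.+1 : int) + 1 = - n%:Z by lia.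
    exact: IH2.
move=> s f hf.
have [c hc] := all s.
have [O [eps [GO he e]]] := gs s.
have a0 := alpha_gt0 s lam0.
have hs : G s = Lat O (alpha lam s) by rewrite hc; apply: Lat_shift; rewrite -hc.
have hs1 := step_up hs e.
rewrite hs1 alphaS; rewrite hs in hf *.
exact: core.
Qed.
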